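(* Let $q$ be a prime power, $m$ a positive integer, $n=q^m-1$, and $\delta$ an integer with $2\le\delta\le q^{\lceil m/2\rceil}+1$ (and $\delta\le n$). Suppose $$\sum_{i=0}^{\lfloor(\delta+1)/2\rfloor}\binom{q^m-1}{i}(q-1)^i> q^{m\lceil(\delta-1)(1-1/q)\rceil}.$$ Then the minimum distance $d$ of $\mathcal{BCH}(n,q;\delta)$ satisfies $d\in\{\delta,\delta+1\}$. If moreover $\delta\equiv0\pmod q$, then $d=\delta+1$.
   Context: Let $\alpha$ be a primitive element of $\mathbf{F}_{q^m}$ and $n=q^m-1$; $C_x=\{xq^k\bmod n\mid k\in\mathbf{Z}\}$. For $2\le\delta\le n$, $\mathcal{BCH}(n,q;\delta)$ is the cyclic code of length $n$ over $\mathbf{F}_q$ with generator polynomial $\prod_{z\in Z}(x-\alpha^z)$, where $Z=C_1\cup\cdots\cup C_{\delta-1}$. *)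

(* Defs.v *)
From HB Require Import structures.
From mathcomp Require Import all_boot all_order all_algebra all_field.
Set Implicit Arguments. Unset Strict Implicit. Unset Printing Implicit Defensive.
Import GRing.Theory.
Local Open Scope ring_scope.

(* Membership of z in Z = C_1 u ... u C_(delta-1), the union of the
   q-cyclotomic cosets modulo n; C_x = { x q^k mod n | k }.  Since
   q^m = 1 mod n, k ranges over 0 <= k < m without loss. *)
Definition inZ (q m n delta : nat) (z : nat) : bool :=
  [exists x : 'I_delta, (0 < (x : nat))%N &&
     [exists k : 'I_m, z == (x * q ^ k) %% n]]%N.

Definition bch_genpoly (L : fieldType) (q m n delta : nat) (alpha : L)
  : {poly L} :=
  \prod_(z < n | inZ q m n delta z) ('X - (alpha ^+ z)%:P).

Definition word_poly (F L : fieldType) (f : {rmorphism F -> L}) (n : nat)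
  (c : 'rV[F]_n) : {poly L} :=
  \sum_(i < n) (f (c 0 i)) *: 'X^i.

Definition BCH (F L : fieldType) (f : {rmorphism F -> L}) (q m n delta : nat)
  (alpha : L) : pred 'rV[F]_n :=
  fun c => bch_genpoly q m n delta alpha %| word_poly f c.

Definition wt (F : fieldType) (n : nat) (c : 'rV[F]_n) : nat :=
  #|[set i : 'I_n | c 0 i != 0]|.

Definition is_min_dist (F : finFieldType) (n : nat) (C : pred 'rV[F]_n)
  (d : nat) : Prop :=
  (exists2 c, C c & (c != 0) && (wt c == d)) /\
  (forall c, C c -> c != 0 -> (d <= wt c)%N).

Arguments BCH {F L} f q m n delta alpha.

(* Main.v *)
Require Import Defs.
From HB Require Import structures.
From mathcomp Require Import all_boot all_order all_algebra all_field.
From mathcomp Require Import all_fingroup all_solvable.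
From mathcomp Require Import zify ring.
Import GRing.Theory.

Lemma count_ndvd q a : 0 < q ->
  count (fun x => ~~ (q %| x)) (iota 1 a) = a - a %/ q.
Proof.
move=> q0; elim: a => [|a IH]; first by rewrite div0n.
rewrite -[a.+1]addn1 iotaD count_cat IH /= addn0 addn1 (divnS _ q0) add1n.
have : a %/ q <= a by apply: leq_div.
case: (q %| a.+1) => /=; lia.
Qed.

Lemma ceil_bound q a : 0 < q -> a - a %/ q <= (a * (q - 1) + (q - 1)) %/ q.
Proof.
move=> q0; rewrite leq_divRL //.
rewrite {1 3}(divn_eq a q); set s := a %/ q; set t := a %% q.
have : t < q by rewrite ltn_mod.
move=> tq; nia.
Qed.

Set Implicit Arguments. Unset Strict Implicit. Unset Printing Implicit Defensive.
Local Open Scope ring_scope.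

Section SA.
Variables (F L : finFieldType) (f : {rmorphism F -> L}).

Lemma pchar_nat_card : [pchar L].-nat #|F|.
Proof.
have [p pr pc] := finPcharP F.
have /abelem_pgroup := fin_ring_pchar_abelem pc.
rewrite /pgroup cardsT => pn.
rewrite (eq_pnat _ (fmorph_pchar f)).
by rewrite (eq_pnat _ (pcharf_eq pc)).
Qed.

Lemma frobQ k (x y : L) : (x + y) ^+ (#|F| ^ k) = x ^+ (#|F| ^ k) + y ^+ (#|F| ^ k).
Proof. by apply: exprDn_pchar; rewrite pnatX pchar_nat_card. Qed.

Lemma expQF k (x : F) : x ^+ (#|F| ^ k) = x.
Proof. elim: k => [|k IH]; first by rewrite expr1.
by rewrite expnSr exprM IH expf_card. Qed.

Lemma wpE n (c : 'rV[F]_n) x :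
  (word_poly f c).[x] = \sum_(i < n) f (c 0 i) * x ^+ i.
Proof.
rewrite /word_poly horner_sum; apply: eq_bigr => i _.
by rewrite hornerZ hornerXn.
Qed.

Lemma wp_frob n (c : 'rV[F]_n) x k :
  (word_poly f c).[x ^+ (#|F| ^ k)] = (word_poly f c).[x] ^+ (#|F| ^ k).
Proof.
have Q0 : (0 < #|F| ^ k)%N by rewrite expn_gt0 (ltn_trans _ (finNzRing_gt1 F)).
have z0 : (0:L) ^+ (#|F| ^ k) = 0 by rewrite expr0n eqn0Ngt Q0.
rewrite !wpE (big_morph (fun y : L => y ^+ (#|F| ^ k)) (@frobQ k) z0).
by apply: eq_bigr => i _; rewrite exprMn -rmorphXn expQF -!exprM mulnC.
Qed.

Lemma wpB n (a b : 'rV[F]_n) x :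
  (word_poly f (a - b)).[x] = (word_poly f a).[x] - (word_poly f b).[x].
Proof.
rewrite !wpE -sumrB; apply: eq_bigr => i _.
by rewrite !mxE rmorphB mulrBl.
Qed.

End SA.



Section SB.
Variables (F L : finFieldType) (f : {rmorphism F -> L}).
Variables (n : nat) (alpha : L) (halpha : n.-primitive_root alpha) (n0 : (0 < n)%N).

Lemma alpha_inj (i j : 'I_n) : alpha ^+ i = alpha ^+ j -> i = j.
Proof.
move/eqP; rewrite (eq_prim_root_expr halpha) !modn_small //.
by move/eqP/val_inj.
Qed.

Lemma alpha_neq0 : alpha != 0.
Proof.
apply/negP => /eqP a0; have := prim_expr_order halpha.
by rewrite a0 expr0n eqn0Ngt n0 /= => /eqP; rewrite eq_sym oner_eq0.
Qed.

Lemma bch_bound (c : 'rV[F]_n) D : c != 0 ->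
  (forall j, (0 < j < D)%N -> (word_poly f c).[alpha ^+ j] = 0) -> (D <= wt c)%N.
Proof.
move=> cn0 hz; rewrite leqNgt; apply/negP => hw.
have [i0 ci0] : exists i0, c 0 i0 != 0.
  apply/existsP; apply: contraR cn0 => /existsPn h; apply/eqP/matrixP => a b.
  by rewrite (ord1 a) mxE; apply/eqP; rewrite -[_ == _]negbK h.
set S := [set i | c 0 i != 0].
have i0S : i0 \in S by rewrite inE.
pose rs := [seq alpha ^+ (val l) | l <- enum (S :\ i0)].
pose p := \prod_(z <- rs) ('X - z%:P).
have sp : size p = wt c.
  rewrite size_prod_XsubC size_map -cardE.
  by rewrite /wt -/S (cardsD1 i0 S) i0S.
have key : \sum_(i < n) f (c 0 i) * alpha ^+ i * p.[alpha ^+ i] = 0.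
  transitivity (\sum_(e < size p) p`_e * (word_poly f c).[alpha ^+ e.+1]).
    rewrite (eq_bigr (fun i : 'I_n => \sum_(e < size p) p`_e * (f (c 0 i) * (alpha ^+ e.+1) ^+ i))).
      by rewrite exchange_big; apply: eq_bigr => e _; rewrite wpE mulr_sumr.
    move=> i _; rewrite horner_coef mulr_sumr; apply: eq_bigr => e _.
    by rewrite -!exprM mulSn exprD [(e * i)%N]mulnC; ring.
  rewrite big1 // => e _; rewrite hz ?mulr0 //=.
  by rewrite (leq_trans _ hw) // -sp ltnS.
move: key; rewrite (bigD1 i0) //= big1 ?addr0.
  apply/eqP; rewrite !mulf_neq0 ?fmorph_eq0 ?expf_neq0 ?alpha_neq0 //.
  rewrite -/(root p _) root_prod_XsubC; apply/mapP => -[l].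
  by rewrite mem_enum !inE => /andP[li0 _] /alpha_inj eq; rewrite eq eqxx in li0.
move=> i ii0; case: (boolP (i \in S)) => iS.
  have /rootP -> : root p (alpha ^+ i).
    rewrite root_prod_XsubC; apply/mapP; exists i => //; rewrite mem_enum !inE ii0 /=; by rewrite inE in iS.
  by rewrite mulr0.
by move: iS; rewrite inE negbK => /eqP ->; rewrite rmorph0 !mul0r.
Qed.

End SB.



Section SC.
Variables (F : finFieldType) (n : nat).
Local Notation T := 'rV[F]_n.

Lemma fiber_bound (U : finType) (phi : T -> U) (K : {set T}) :
  (forall a b, phi a = phi b -> a - b \in K) -> (#|T| <= #|K| * #|U|)%N.
Proof.
move=> hK.
pose s (y : U) : T := odflt 0 [pick c | phi c == y].
have sP c : phi (s (phi c)) = phi c.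
  rewrite /s; case: pickP => [x /eqP //|/(_ c)]; by rewrite eqxx.
pose g (c : T) := (c - s (phi c), phi c).
have ginj : injective g.
  move=> a b [] e1 e2; move: e1; rewrite e2 => /eqP; rewrite subr_eq subrK.
  by move/eqP.
have -> : (#|K| * #|U| = #|setX K [set: U]|)%N by rewrite cardsX cardsT.
rewrite -cardsT -(card_imset _ ginj).
apply: subset_leq_card; apply/subsetP => _ /imsetP[c _ ->].
by rewrite !inE /= andbT hK // sP.
Qed.

Lemma wt_sub (a b : T) : (wt (a - b) <= wt a + wt b)%N.
Proof.
rewrite /wt; apply: leq_trans (leq_card_setU _ _).
apply: subset_leq_card; apply/subsetP => i; rewrite !inE mxE.
apply: contraR; rewrite negb_or !negbK mxE => /andP[/eqP -> /eqP ->].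
by rewrite subr0.
Qed.

Lemma packing (K : {set T}) t :
  (forall a b, a \in K -> b \in K -> a - b \in K) ->
  (forall c, c \in K -> c != 0 -> (t.*2 < wt c)%N) ->
  (#|K| * #|[set e : T | (wt e <= t)%N]| <= #|T|)%N.
Proof.
move=> Ksub Kw.
pose h (p : T * T) := p.1 + p.2.
rewrite -cardsX -(@card_in_imset _ _ h); first by apply: max_card.
move=> [c1 e1] [c2 e2]; rewrite !inE /h /= => /andP[c1K e1E] /andP[c2K e2E] eq.
have : c1 - c2 = e2 - e1.
  by rewrite -[c1](addrK e1) eq -addrA [c2 + _]addrC addrACA subrr addr0.
case: (eqVneq (c1 - c2) 0) => [/eqP|nz].
  rewrite subr_eq0 => /eqP ->; rewrite subrr => /esym/eqP; rewrite subr_eq0 => /eqP ->; done.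
move=> e; have := Kw _ (Ksub _ _ c1K c2K) nz; rewrite e => hh.
have := leq_trans hh (wt_sub _ _); rewrite -addnn.
by rewrite ltnNge leq_add.
Qed.

End SC.



Section SD.
Variables (F : finFieldType) (n : nat).
Local Notation T := 'rV[F]_n.

Definition suppf (g : {ffun 'I_n -> F}) : {set 'I_n} := [set j | g j != 0].

Lemma card_ffun_wt i :
  #|[set g : {ffun 'I_n -> F} | #|suppf g| == i]| = ('C(n, i) * #|F|.-1 ^ i)%N.
Proof.
rewrite -sum1_card.
rewrite (partition_big (s := index_enum _) suppf (fun S : {set 'I_n} => #|S| == i)); last first.
  by move=> g; rewrite inE.
transitivity (\sum_(S : {set 'I_n} | #|S| == i) #|F|.-1 ^ i)%N; last first.
  rewrite sum_nat_const; congr (_ * _)%N.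
  rewrite -[in RHS](card_ord n) -card_draws.
  by apply: eq_card => S; rewrite inE.
apply: eq_bigr => S /eqP cS.
rewrite sum1dep_card -cS -(cardC1 (0 : F)) -(card_pffun_on 0 S (predC1 (0 : F))).
apply: eq_card => g; rewrite !inE.
apply/idP/pffun_onP.
  move=> /andP[_ /eqP <-]; split.
    by apply/subsetP => j; rewrite supportE inE.
  by move=> y /imageP[j jS ->]; rewrite !inE; move: jS; rewrite inE.
move=> [/subsetP s1 s2]; have eS : suppf g = S.
  apply/setP => j; rewrite inE; apply/idP/idP; first exact: s1.
  by move=> jS; have := s2 (g j) (map_f _ _); rewrite !inE; apply; rewrite mem_enum.
by rewrite eS cS !eqxx.
Qed.

Lemma card_wt_eq i : #|[set e : T | wt e == i]| = ('C(n, i) * #|F|.-1 ^ i)%N.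
Proof.
rewrite -card_ffun_wt.
pose h (g : {ffun 'I_n -> F}) : T := \row_j g j.
have hinj : injective h.
  by move=> a b e; apply/ffunP => j; have := congr1 (fun M : T => M 0 j) e; rewrite !mxE.
rewrite -(card_imset _ hinj); apply: eq_card => e; rewrite inE.
apply/idP/imsetP.
  move=> we; exists [ffun j => e 0 j].
    rewrite inE; have -> : suppf [ffun j => e 0 j] = [set j | e 0 j != 0].
      by apply/setP => j; rewrite !inE ffunE.
    exact: we.
  by apply/matrixP => a b; rewrite (ord1 a) /h mxE ffunE.
move=> [g]; rewrite inE => hg ->; rewrite /wt.
have -> : [set j | h g 0 j != 0] = suppf g by apply/setP => j; rewrite !inE mxE.
exact: hg.
Qed.

Lemma card_ball t :
  #|[set e : T | (wt e <= t)%N]| = (\sum_(0 <= i < t.+1) 'C(n, i) * #|F|.-1 ^ i)%N.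
Proof.
elim: t => [|t IH].
  rewrite big_nat1 -card_wt_eq; apply: eq_card => e; by rewrite !inE leqn0.
rewrite big_nat_recr //= -IH -card_wt_eq -cardsUI.
have -> : [set e : T | (wt e <= t)%N] :&: [set e | wt e == t.+1] = set0.
  apply/setP => e; rewrite !inE; apply/negP => /andP[h1 /eqP h2].
  by rewrite h2 ltnn in h1.
rewrite cards0 addn0; apply: eq_card => e; by rewrite !inE leq_eqVlt ltnS orbC.
Qed.

End SD.


Unset Implicit Arguments.

Theorem mainTheorem7 (F L : finFieldType) (f : {rmorphism F -> L})
  (q m delta : nat) (alpha : L)
  (hF : #|F| = q) (hm : (0 < m)%N) (hL : #|L| = (q ^ m)%N)
  (halpha : (q ^ m - 1)%N.-primitive_root alpha)
  (hdelta2 : (2 <= delta)%N)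
  (hdeltaub : (delta <= q ^ ((m + 1) %/ 2) + 1)%N)
  (hdeltan : (delta <= q ^ m - 1)%N)
  (hsum : (q ^ (m * (((delta - 1) * (q - 1) + (q - 1)) %/ q))
           < \sum_(0 <= i < (delta + 1) %/ 2 + 1) 'C(q ^ m - 1, i) * (q - 1) ^ i)%N) :
  exists d : nat, is_min_dist (BCH f q m (q ^ m - 1) delta alpha) d /\
    (d = delta \/ d = delta.+1)%N /\
    ((q %| delta)%N -> d = delta.+1)%N.
Proof.
subst q.
have q2 : (1 < #|F|)%N := finNzRing_gt1 F.
have q0 : (0 < #|F|)%N by lia.
set n := (#|F| ^ m - 1)%N in halpha hdeltan hsum *.
have qm : (#|F| <= #|F| ^ m)%N.
  by rewrite -{1}(expn1 #|F|) leq_pexp2l.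
have n0 : (0 < n)%N by rewrite /n; lia.
pose P (c : 'rV[F]_n) := word_poly f c.
have cw_root : forall c, BCH f #|F| m n delta alpha c ->
    forall j, (0 < j < delta)%N -> (P c).[alpha ^+ j] = 0.
  move=> c hc j /andP[j0 jd]; apply/rootP; apply: (root_dvdp hc).
  have jn : (j < n)%N by lia.
  rewrite /root /bch_genpoly horner_prod (bigD1 (Ordinal jn)) /=.
    by rewrite hornerXsubC subrr mul0r.
  apply/existsP; exists (Ordinal jd); rewrite /= j0 /=.
  apply/existsP; exists (Ordinal hm); rewrite /= expn0 muln1 modn_small //.
set R := [seq x <- iota 1 (delta - 1) | ~~ (#|F| %| x)%N].
set r := size R.
pose K := [set c : 'rV[F]_n | [forall j : 'I_r, (P c).[alpha ^+ nth 0%N R j] == 0]].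
have Kall : forall c, c \in K -> forall x, (0 < x < delta)%N -> (P c).[alpha ^+ x] = 0.
  move=> c; rewrite inE => /forallP hK x.
  elim: x {-2}x (leqnn x) => [|N IH] x xN /andP[x0 xd]; first by lia.
  case: (boolP (#|F| %| x)%N) => qx.
    have ex : x = (x %/ #|F| * #|F| ^ 1)%N by rewrite expn1 divnK.
    have lt : (x %/ #|F| < x)%N by rewrite ltn_Pdiv.
    rewrite ex exprM wp_frob IH.
    - by rewrite expr0n expn1 gtn_eqF.
    - lia.
    rewrite divn_gt0 // (dvdn_leq x0 qx) /=.
    by apply: leq_ltn_trans (leq_div _ _) xd.
  have xR : x \in R by rewrite mem_filter qx mem_iota; lia.
  have xr : (index x R < r)%N by rewrite index_mem.
  by have := hK (Ordinal xr); rewrite /= nth_index // => /eqP.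
have KC : forall c, c \in K -> BCH f #|F| m n delta alpha c.
  move=> c cK; rewrite /BCH /bch_genpoly.
  rewrite -big_filter -(big_map (fun z : 'I_n => alpha ^+ z) xpredT (fun a : L => 'X - a%:P)).
  apply: uniq_roots_dvdp; last first.
    rewrite uniq_rootsE (map_inj_uniq (alpha_inj halpha)).
    by rewrite filter_uniq // index_enum_uniq.
  apply/allP => a /mapP[z]; rewrite mem_filter => /andP[hz _] ->.
  move/existsP: hz => [x /andP[x0 /existsP[k /eqP ->]]].
  rewrite (prim_expr_mod halpha) exprM; apply/rootP.
  by rewrite wp_frob (Kall c cK) ?expr0n ?expn_eq0 ?gtn_eqF //= x0 /=.
have Ksub : forall a b, a \in K -> b \in K -> a - b \in K.
  move=> a b; rewrite !inE => /forallP ha /forallP hb; apply/forallP => j.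
  by rewrite /P wpB (eqP (ha j)) (eqP (hb j)) subrr.
pose phi (c : 'rV[F]_n) := [ffun j : 'I_r => (P c).[alpha ^+ nth 0%N R j]].
have fib : forall a b, phi a = phi b -> a - b \in K.
  move=> a b e; rewrite inE; apply/forallP => j.
  have := congr1 (fun g : {ffun 'I_r -> L} => g j) e; rewrite /phi !ffunE => ej.
  by rewrite /P wpB -/(P a) -/(P b) ej subrr.
have hr : (r <= ((delta - 1) * (#|F| - 1) + (#|F| - 1)) %/ #|F|)%N.
  rewrite /r /R size_filter count_ndvd //.
  exact: ceil_bound.
set N := (m * (((delta - 1) * (#|F| - 1) + (#|F| - 1)) %/ #|F|))%N in hsum.
have cU : (#|{ffun 'I_r -> L}| <= #|F| ^ N)%N.
  rewrite card_ffun card_ord hL -expnM leq_pexp2l //.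
  by rewrite /N leq_mul2l hr orbT.
set t := ((delta + 1) %/ 2)%N in hsum.
have cB : #|[set e : 'rV[F]_n | (wt e <= t)%N]| =
    (\sum_(0 <= i < t + 1) 'C(n, i) * (#|F| - 1) ^ i)%N.
  by rewrite card_ball addn1 subn1.
have hex : exists c, [/\ c \in K, c != 0 & (wt c <= t.*2)%N].
  case: (boolP [exists c : 'rV[F]_n, [&& c \in K, c != 0 & (wt c <= t.*2)%N]]).
    by move=> /existsP[c /and3P[h1 h2 h3]]; exists c.
  move=> /existsPn hne.
  have Kw : forall c, c \in K -> c != 0 -> (t.*2 < wt c)%N.
    by move=> c cK cnz; have := hne c; rewrite cK cnz /= ltnNge.
  have h1 := packing Ksub Kw.
  have h2 := fiber_bound fib.
  have K0 : (0 < #|K|)%N.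
    apply/card_gt0P; exists 0; rewrite inE; apply/forallP => j.
    by rewrite /P wpE big1 // => i _; rewrite mxE rmorph0 mul0r.
  have : (#|K| * #|[set e : 'rV[F]_n | (wt e <= t)%N]| <= #|K| * #|F| ^ N)%N.
    by apply: leq_trans h1 (leq_trans h2 _); rewrite leq_mul2l cU orbT.
  by rewrite leq_pmul2l // cB leqNgt hsum.
case: hex => c0 [c0K c0nz c0w].
have t2 : (t.*2 <= delta.+1)%N.
  have := leq_trunc_div (delta + 1) 2; rewrite -/t -muln2; lia.
pose Pw w := [exists c : 'rV[F]_n, [&& BCH f #|F| m n delta alpha c, c != 0 & wt c == w]].
have exw : exists w, Pw w.
  by exists (wt c0); apply/existsP; exists c0; rewrite KC // c0nz eqxx.
case: (ex_minnP exw) => d /existsP[c1 /and3P[c1C c1nz /eqP c1w]] dmin.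
have lo : (delta <= d)%N by rewrite -c1w; apply: (bch_bound halpha n0 c1nz (cw_root c1 c1C)).
have hi : (d <= delta.+1)%N.
  apply: leq_trans (dmin (wt c0) _) (leq_trans c0w t2).
  by apply/existsP; exists c0; rewrite KC // c0nz eqxx.
exists d; split; [split|split].
- by exists c1; rewrite // c1nz c1w eqxx.
- move=> c cC cnz; apply: dmin; by apply/existsP; exists c; rewrite cC cnz eqxx.
- by lia.
move=> qd; suff : (delta.+1 <= d)%N by lia.
rewrite -c1w; apply: (bch_bound halpha n0 c1nz) => j /andP[j0 jd].
case: (ltngtP j delta) => jdl; first by apply: (cw_root c1 c1C); rewrite j0.
  by lia.
have lt : (delta %/ #|F| < delta)%N by rewrite ltn_Pdiv //; lia.
have ex : j = (delta %/ #|F| * #|F| ^ 1)%N by rewrite expn1 divnK.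
rewrite ex exprM wp_frob (cw_root c1 c1C).
  by rewrite expr0n expn1 gtn_eqF.
by rewrite lt divn_gt0 // (dvdn_leq _ qd) //; lia.
Qed.
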